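(* Let $r\ge2$ and let $V^\star\in\mathcal V_r$ be nonempty, with $V$ its linear span and $d=\dim V$. Then for every $\vec k\in V^\star\cap\mathbb Z^{r-1}$, $\alpha(\vec k)\le 2^{r-d-1}$.
   Context: For $\vec k=(k_1,\ldots,k_{r-1})\in\mathbb R^{r-1}$ set $k_0=k_r=0$ and, for $\mathbf S\subset\{0,\ldots,r-1\}$, $k_{\mathbf S}=\sum_{j\in\mathbf S}(k_{j+1}-k_j)$. $\mathcal M_r$ is the set of equivalence classes of subsets of $\{0,\ldots,r-1\}$ under $\mathbf S\sim\{0,\ldots,r-1\}\setminus\mathbf S$ (the condition $k_{\mathbf S}=0$ depends only on the class since $k_{\mathbf S^c}=-k_{\mathbf S}$). $\alpha(\vec k)=\#\{[\mathbf S]\in\mathcal M_r:k_{\mathbf S}=0\}$. For $S\subset\mathcal M_r$, $\ker(M_S)=\{\vec k\in\mathbb R^{r-1}:k_{\mathbf S}=0\ \forall[\mathbf S]\in S\}$ and $\ker(M_S)^\star=\ker(M_S)\setminus\bigcup_{S_1\subset\mathcal M_r,\,S_1\supsetneq S}\ker(M_{S_1})$; $\mathcal V_r=\{\ker(M_S)^\star:S\subset\mathcal M_r\}$, which partitions $\mathbb R^{r-1}$. *)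

(* Defs.v *)
From HB Require Import structures.
From mathcomp Require Import all_boot all_order all_algebra.
From mathcomp Require Import reals.
Set Implicit Arguments. Unset Strict Implicit. Unset Printing Implicit Defensive.
Import Order.TTheory GRing.Theory Num.Theory.
Local Open Scope ring_scope.

Section Defs.
Variables (R : realType) (r : nat).

(* k_j for j = 0..r, with k_0 = k_r = 0 and k_j = k 0 (j-1) for 1 <= j <= r-1 *)
Definition kcoord (k : 'rV[R]_(r.-1)) (j : nat) : R :=
  if j is j'.+1 then
    (if insub j' is Some i then k ord0 i else 0)
  else 0.

Definition kS (k : 'rV[R]_(r.-1)) (S : {set 'I_r}) : R :=
  \sum_(j in S) (kcoord k j.+1 - kcoord k j).

Definition mclass (S : {set 'I_r}) : {set {set 'I_r}} := [set S; ~: S].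

Definition Mr : {set {set {set 'I_r}}} := [set mclass S | S : {set 'I_r}].

(* k_[S] = 0 (independent of the representative) *)
Definition class_zero (k : 'rV[R]_(r.-1)) (C : {set {set 'I_r}}) : bool :=
  [exists S in C, kS k S == 0].

Definition alpha (k : 'rV[R]_(r.-1)) : nat :=
  #|[set C in Mr | class_zero k C]|.

Definition kerM (S : {set {set {set 'I_r}}}) (k : 'rV[R]_(r.-1)) : bool :=
  [forall C in S, class_zero k C].

Definition kerMstar (S : {set {set {set 'I_r}}}) (k : 'rV[R]_(r.-1)) : bool :=
  kerM S k &&
  ~~ [exists S1 : {set {set {set 'I_r}}},
        [&& S1 \subset Mr, S \proper S1 & kerM S1 k]].

End Defs.

Definition is_linear_span (K : fieldType) (vT : vectType K)
  (A : vT -> Prop) (U : {vspace vT}) : Prop :=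
  (forall v, A v -> v \in U) /\
  (forall W : {vspace vT}, (forall v, A v -> v \in W) -> (U <= W)%VS).

(* Main.v *)
Require Import Defs.
From HB Require Import structures.
From mathcomp Require Import all_boot all_order all_algebra.
From mathcomp Require Import reals zify.
Set Implicit Arguments. Unset Strict Implicit. Unset Printing Implicit Defensive.
Import Order.TTheory GRing.Theory Num.Theory.
Local Open Scope ring_scope.


Definition ind (F : fieldType) m (T : {set 'I_m}) : 'rV[F]_m := \row_j (j \in T)%:R.

Lemma ind_inj (F : fieldType) m : injective (@ind F m).
Proof.
move=> T1 T2 /rowP E; apply/setP => j; have := E j; rewrite !mxE.
by case: (j \in T1); case: (j \in T2) => //= /eqP; rewrite ?oner_eq0 // eq_sym oner_eq0.
Qed.

Lemma odlyzko (F : fieldType) m n (A : 'M[F]_(n, m)) :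
  (#|[set T : {set 'I_m} | (ind F T <= A)%MS]| <= 2 ^ \rank A)%N.
Proof.
set X := [set T | _].
pose B := row_base A.
pose f := maxrankfun B^T.
have rfree : row_free (colsub f B).
  rewrite /row_free -mxrank_tr trmx_mxsub.
  have := maxrowsub_free B^T; rewrite /row_free => /eqP ->.
  by rewrite mxrank_tr eq_row_base.
pose g (T : {set 'I_m}) := [set i | f i \in T].
have ginj : {in X &, injective g}.
  move=> T1 T2; rewrite !inE => H1 H2 Eg.
  have HB1 : (ind F T1 <= B)%MS by rewrite eq_row_base.
  have HB2 : (ind F T2 <= B)%MS by rewrite eq_row_base.
  apply: (@ind_inj F); rewrite -(mulmxKpV HB1) -(mulmxKpV HB2); congr (_ *m _).
  apply: (row_free_inj rfree); rewrite !mulmx_colsub !mulmxKpV //.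
  apply/rowP => i; rewrite !mxE.
  move/setP: Eg => /(_ i); rewrite /g !inE => ->; done.
suff: (#|X| <= 2 ^ \rank B^T)%N by rewrite mxrank_tr eq_row_base.
rewrite -(card_in_imset ginj) -[X in (2 ^ X)%N]card_ord -cardsT -card_powerset.
apply: subset_leq_card; apply/subsetP => S _; rewrite powersetE; exact: subsetT.
Qed.

Section Main.
Variables (R : realType) (n : nat).
Local Notation kc := (@kcoord R n.+2).
Local Notation kS' := (@kS R n.+2).
Local Notation cz := (@class_zero R n.+2).

Lemma kcoordE (v : 'rV[R]_n.+1) m : kc v m = \sum_i v 0 i * kc (delta_mx 0 i) m.
Proof.
case: m => [|m] /=; first by rewrite big1 // => i _; rewrite mulr0.
case: insubP => [i _ _|_]; last by rewrite big1 // => i _; rewrite mulr0.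
by rewrite {1}(row_sum_delta v) summxE; apply: eq_bigr => j _; rewrite mxE.
Qed.

Definition Dm : 'M[R]_(n.+1, n.+2) :=
  \matrix_(i, j) (kc (delta_mx 0 i) (nat_of_ord j).+1 - kc (delta_mx 0 i) j).

Lemma DmE (v : 'rV[R]_n.+1) (j : 'I_n.+2) : (v *m Dm) 0 j = kc v j.+1 - kc v j.
Proof.
rewrite mxE (kcoordE v j.+1) (kcoordE v j) -sumrB; apply: eq_bigr => i _.
by rewrite mxE mulrBr.
Qed.

Lemma kSE (v : 'rV[R]_n.+1) T : kS' v T = \sum_(j in T) (v *m Dm) 0 j.
Proof. by apply: eq_bigr => j _; rewrite DmE. Qed.

Lemma kc_last (v : 'rV[R]_n.+1) : kc v n.+2 = 0.
Proof. by rewrite /= insubN // ltnn. Qed.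

Lemma kS_setT (v : 'rV[R]_n.+1) : kS' v setT = 0.
Proof.
rewrite /kS (eq_bigl xpredT) => [|j]; last by rewrite inE.
rewrite -(big_mkord xpredT (fun j => kc v j.+1 - kc v j)).
by rewrite telescope_sumr // kc_last subrr.
Qed.

Lemma kS_compl (v : 'rV[R]_n.+1) T : kS' v (~: T) = - kS' v T.
Proof.
have := kS_setT v; rewrite /kS (big_setID T) /= setTI setTD.
by move/eqP; rewrite addr_eq0 => /eqP ->; rewrite opprK.
Qed.

Lemma Dm_free : row_free Dm.
Proof.
rewrite -kermx_eq0; apply/rowV0P => v /sub_kermxP Hv.
have E j : (j < n.+2)%N -> kc v j.+1 = kc v j.
  move=> lt; apply/eqP; rewrite -subr_eq0 -(DmE v (Ordinal lt)) Hv mxE //.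
have Z m : (m <= n.+2)%N -> kc v m = 0.
  elim: m => [//|m IH] lt; rewrite E // IH // ltnW //.
apply/rowP => i; rewrite mxE.
have := Z i.+1 (leqW (ltn_ord i)); rewrite /= valK //.
Qed.


Lemma class_zero_mem (v : 'rV[R]_n.+1) (T0 T : {set 'I_n.+2}) :
  cz v (mclass T0) -> T \in mclass T0 -> kS' v T = 0.
Proof.
move=> /existsP [S0 /andP [HS0 /eqP H0]]; rewrite /mclass !inE in HS0 *.
have H1 : kS' v T0 = 0.
  case/orP: HS0 => /eqP E; move: H0; rewrite E ?kS_compl // => /eqP.
  by rewrite oppr_eq0 => /eqP.
by case/orP => /eqP ->; rewrite ?kS_compl H1 ?oppr0.
Qed.

Lemma kerMstar_zero (S : {set {set {set 'I_n.+2}}}) (k : 'rV[R]_n.+1) (C : {set {set 'I_n.+2}}) :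
  S \subset Mr n.+2 -> kerMstar S k -> C \in Mr n.+2 -> cz k C -> C \in S.
Proof.
move=> hS /andP [hk hno] hC hz; apply/negPn/negP => hCS.
apply: (negP hno); apply/existsP; exists (C |: S).
rewrite subUset sub1set hC hS properUr ?sub1set //=.
apply/forallP => C'; apply/implyP; rewrite !inE => /orP [/eqP -> //| hC'].
by move/forallP: hk => /(_ C') /implyP; apply.
Qed.

Lemma helper (S : {set {set {set 'I_n.+2}}}) (hS : S \subset Mr n.+2)
  (V : {vspace 'rV[R]_n.+1})
  (hV : is_linear_span (fun k : 'rV[R]_n.+1 => kerMstar S k) V)
  (k : 'rV[R]_n.+1) : kerMstar S k -> (@alpha R n.+2 k <= 2 ^ (n.+2 - \dim V - 1))%N.
Proof.
move=> hk.
set d := \dim V. pose b := vbasis V.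
pose B : 'M[R]_(d, n.+1) := \matrix_(i, j) (tnth b i) 0 j.
have rowB i : row i B = tnth b i by apply/rowP => j; rewrite !mxE.
pose N := (B *m Dm)^T.
have freeBD : row_free (B *m Dm).
  rewrite -kermx_eq0; apply/rowV0P => w /sub_kermxP; rewrite mulmxA => Hw.
  have H0 : w *m B = 0 by apply: (row_free_inj Dm_free); rewrite Hw mul0mx.
  move: H0; rewrite mulmx_sum_row => H0.
  have Hf := basis_free (vbasisP V).
  move/freeP: Hf => /(_ (fun i => w 0 i)) Hf.
  apply/rowP => i; rewrite mxE; apply: Hf.
  rewrite -[RHS]H0; apply: eq_bigr => j _; rewrite rowB (tnth_nth 0) //.
have rkN : \rank N = d by rewrite mxrank_tr; apply/eqP.
pose Z := [set T : {set 'I_n.+2} | (ind R T <= kermx N)%MS].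
have hZ : (#|Z| <= 2 ^ (n.+2 - d))%N.
  by have := odlyzko (kermx N); rewrite mxrank_ker rkN.
have kSmat v T : (v *m (Dm *m (ind R T)^T)) 0 0 = kS' v T.
  rewrite mulmxA kSE mxE [RHS]big_mkcond /=; apply: eq_bigr => j _.
  by rewrite !mxE; case: (j \in T); rewrite ?mulr1 ?mulr0.
have hsub C : C \in Mr n.+2 -> cz k C -> forall T, T \in C -> T \in Z.
  move=> hC hz T hT.
  have hCS := kerMstar_zero hS hk hC hz.
  case/imsetP: hC => T1 _ EC.
  have Hall v : kerMstar S v -> kS' v T = 0.
    move=> /andP [/forallP /(_ C) /implyP /(_ hCS) hv _].
    rewrite EC in hv hT; exact: class_zero_mem hv hT.
  pose W : {vspace 'rV[R]_n.+1} := lker (linfun (@mulmxr R 1 _ _ (Dm *m (ind R T)^T))).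
  have hVW : (V <= W)%VS.
    apply: hV.2 => v hv; rewrite memv_ker lfunE /=; apply/eqP/rowP => i.
    by rewrite ord1 [RHS]mxE kSmat Hall.
  rewrite inE; apply/sub_kermxP.
  apply/rowP => i.
  have : tnth b i \in W by apply: (subvP hVW); apply: vbasis_mem; apply: mem_tnth.
  rewrite memv_ker lfunE /= => /eqP /rowP /(_ 0); rewrite kSmat [RHS]mxE => Hi.
  rewrite /N -[ind R T]trmxK -trmx_mul mxE [RHS]mxE -mulmxA.
  have -> : (B *m (Dm *m (ind R T)^T)) i 0 = (row i B *m (Dm *m (ind R T)^T)) 0 0.
    by rewrite -row_mul [RHS]mxE.
  by rewrite rowB kSmat.
pose Zk := [set C in Mr n.+2 | cz k C].
pose Z0 := [set T in Z | (ord0 \in T) && (~: T \in Z)].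
have h1 : Zk \subset @mclass n.+2 @: Z0.
  apply/subsetP => C; rewrite inE => /andP [hC hz].
  have hT := hsub C hC hz. case/imsetP: (hC) => T1 _ EC.
  have hT1 : T1 \in C by rewrite EC !inE eqxx.
  have hT1c : ~: T1 \in C by rewrite EC !inE eqxx orbT.
  case: (boolP (ord0 \in T1)) => h0.
  - by apply/imsetP; exists T1 => //; rewrite inE (hT _ hT1) h0 (hT _ hT1c).
  - apply/imsetP; exists (~: T1); first by rewrite inE (hT _ hT1c) setCK (hT _ hT1) andbT inE h0.
    by rewrite EC /mclass setCK; apply/setP => x; rewrite !inE orbC.
have h2 : (#|Z0| + #|Z0| <= #|Z|)%N.
  rewrite -(cardsID Z0 Z).
  have -> : Z :&: Z0 = Z0 by apply/setIidPr/subsetP => T; rewrite !inE => /andP [].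
  rewrite leq_add2l -(card_imset Z0 (@setC_inj _)).
  apply: subset_leq_card; apply/subsetP => T /imsetP [T1 hT1 ->].
  rewrite !inE in hT1 *; case/and3P: hT1 => _ h0 hc.
  by rewrite hc h0 andbT.
have : (@alpha R n.+2 k <= #|Z0|)%N.
  apply: (leq_trans (subset_leq_card h1)); exact: leq_imset_card.
move: hZ h2; case: (n.+2 - d)%N => [|e]; rewrite ?expn0 ?sub0n ?expnS ?subSS ?subn0 ?expn0; lia.
Qed.

End Main.

Theorem mainTheorem8 (R : realType) (r : nat) (hr : (2 <= r)%N)
  (S : {set {set {set 'I_r}}}) (hS : S \subset Mr r)
  (hne : exists k : 'rV[R]_(r.-1), kerMstar S k)
  (V : {vspace 'rV[R]_(r.-1)})
  (hV : is_linear_span (fun k : 'rV[R]_(r.-1) => kerMstar S k) V) :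
  forall k : 'rV[R]_(r.-1), kerMstar S k ->
    (forall i : 'I_(r.-1), k ord0 i \is a Num.int) ->
    (alpha k <= 2 ^ (r - \dim V - 1))%N.
Proof.
case: r hr S hS hne V hV => [|[|n]] // _ S hS _ V hV k hk _.
exact: (@helper R n S hS V hV k hk).
Qed.
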